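(* Let $R$ be a uniform $L$-layered $1$-semifield$^\dagger$ and $a\in R$. Let $f=\sum_{i=0}^m (a^i)^{[\ell_i]}\lambda^{m-i}$ and $g=\sum_{j=0}^n (a^j)^{[k_j]}\lambda^{n-j}$ (so $f$ and $g$ are both $a$-primary). Then $|\Re(f,g)|$ is the element of $\mathcal{G}$-value $a^{mn}$ whose layer $\ell'$ is the permanent of the $(m+n)\times(m+n)$ matrix of the layers of the entries of the Sylvester matrix $\Re(f,g)$.
   Context: Concretely, $R=R(L,\mathcal{G})$ with $L$ a totally ordered commutative semiring$^\dagger$ (semiring without necessarily a zero; for layers of zero entries one adjoins $0$ to $L$) and $\mathcal{G}$ a totally ordered abelian group; elements are $x^{[\ell]}$ ($x\in\mathcal{G}$, layer $\ell$), with $x^{[k]}y^{[\ell]}=(xy)^{[k\ell]}$ and $x^{[k]}+y^{[\ell]}$ equal to $x^{[k]}$ if $x>y$, $y^{[\ell]}$ if $x<y$, $x^{[k+\ell]}$ if $x=y$; $(c)^{[\ell]}$ denotes the element with the $\mathcal{G}$-value of $c$ and layer $\ell$. A zero element $\mathbb{0}_R$ (additive identity, multiplicatively absorbing, layer $0$) is formally adjoined. The layered permanent of an $N\times N$ matrix $A=(a_{ij})$ is $|A|=\sum_{\sigma\in S_N}a_{1,\sigma(1)}\cdots a_{N,\sigma(N)}$. For $f=\sum_{i=0}^m\alpha_i\lambda^i$, $A_n(f)$ is the $n\times(m+n)$ matrix whose $r$-th row is $(\mathbb{0},\dots,\mathbb{0},\alpha_0,\alpha_1,\dots,\alpha_m,\mathbb{0},\dots,\mathbb{0})$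 with $r-1$ leading zeros; for $g$ of degree $n\ge1$ the Sylvester matrix is $\Re(f,g)=\binom{A_n(f)}{A_m(g)}$ and the resultant is $|\Re(f,g)|$ (for constant $f=\alpha_0$ it is $\alpha_0^n$, and symmetrically). The permanent of the layer matrix is computed in $L$ (with ordinary sums and products). *)

(* Defs.v *)
From HB Require Import structures.
From mathcomp Require Import all_boot all_order all_algebra all_fingroup.
Set Implicit Arguments. Unset Strict Implicit. Unset Printing Implicit Defensive.
Import GRing.Theory.
Local Open Scope ring_scope.

Record layerSemiring := LayerSemiring {
  lcar :> Type;
  ladd : lcar -> lcar -> lcar;
  lmul : lcar -> lcar -> lcar;
  lone : lcar;
  lle  : lcar -> lcar -> bool;
  laddA : forall x y z, ladd x (ladd y z) = ladd (ladd x y) z;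
  laddC : forall x y, ladd x y = ladd y x;
  lmulA : forall x y z, lmul x (lmul y z) = lmul (lmul x y) z;
  lmulC : forall x y, lmul x y = lmul y x;
  lmul1 : forall x, lmul lone x = x;
  lmulDl : forall x y z, lmul (ladd x y) z = ladd (lmul x z) (lmul y z);
  lle_refl : forall x, lle x x;
  lle_anti : forall x y, lle x y -> lle y x -> x = y;
  lle_trans : forall x y z, lle x y -> lle y z -> lle x z;
  lle_total : forall x y, lle x y || lle y x;
  lle_add : forall x y z, lle x y -> lle (ladd x z) (ladd y z);
  lle_mul : forall x y z, lle x y -> lle (lmul x z) (lmul y z)
}.

(* The group G is written additively: a zmodType with a total order    *)
Definition total_order_group (G : zmodType) (le : rel G) : Prop :=
  [/\ forall x, le x x,
      forall x y, le x y -> le y x -> x = y,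
      forall x y z, le x y -> le y z -> le x z,
      forall x y, le x y || le y x
    & forall x y z, le x y -> le (x + z) (y + z)].

(* The uniform layered 1-semifield R(L,G) with a formally adjoined      *)
(* zero: None is the zero, Some (x, l) is x^[l].                         *)
Section Layered.
Variables (L : layerSemiring) (G : zmodType) (leG : rel G).

Definition lay := option (G * L).

Definition lzero : lay := None.
Definition lone_ : lay := Some (0, lone L).

Definition lay_add (u v : lay) : lay :=
  match u, v with
  | None, _ => v
  | _, None => u
  | Some (x, k), Some (y, l) =>
      if x == y then Some (x, ladd k l)
      else if leG y x then Some (x, k) else Some (y, l)
  end.

Definition lay_mul (u v : lay) : lay :=
  match u, v with
  | Some (x, k), Some (y, l) => Some (x + y, lmul k l)
  | _, _ => None
  end.

Fixpoint lay_exp (u : lay) (i : nat) : lay :=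
  match i with 0 => lone_ | i.+1 => lay_mul u (lay_exp u i) end.

(* G-value of a nonzero element (default 0 for the zero element) *)
Definition lgval (u : lay) : G := if u is Some (x, _) then x else 0.

(* layer of an element, in L with 0 adjoined (None = layer 0) *)
Definition layer (u : lay) : option L := omap snd u.

(* (c)^[l] : the element with G-value of c and layer l (c nonzero) *)
Definition with_layer (c : lay) (l : L) : lay := Some (lgval c, l).

Definition lay_perm N (A : 'M[lay]_N) : lay :=
  \big[lay_add/lzero]_(s : 'S_N) \big[lay_mul/lone_]_(i < N) A i (s i).

(* Sylvester matrix: f = sum_{i<=m} alpha i * lambda^i,
   g = sum_{j<=n} beta j * lambda^j; rows of A_n(f) then rows of A_m(g). *)
Definition sylvester (m n : nat) (alpha beta : nat -> lay) : 'M[lay]_(n + m) :=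
  \matrix_(r < n + m, c < n + m)
    if (r < n)%N then
      (if (r <= c <= r + m)%N then alpha (c - r)%N else lzero)
    else
      (if (r - n <= c <= r - n + n)%N then beta (c - (r - n))%N else lzero).

End Layered.

Section LayerZero.
Variable L : layerSemiring.
Definition l0add (u v : option L) : option L :=
  match u, v with
  | None, _ => v | _, None => u | Some a, Some b => Some (ladd a b) end.
Definition l0mul (u v : option L) : option L :=
  match u, v with Some a, Some b => Some (lmul a b) | _, _ => None end.
Definition l0perm N (A : 'M[option L]_N) : option L :=
  \big[l0add/None]_(s : 'S_N) \big[l0mul/Some (lone L)]_(i < N) A i (s i).
End LayerZero.

(* Main.v *)
Require Import Defs.
From mathcomp Require Import all_boot all_order all_algebra all_fingroup.
From mathcomp Require Import zify.
Set Implicit Arguments. Unset Strict Implicit. Unset Printing Implicit Defensive.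
Import GRing.Theory.
Local Open Scope ring_scope.

Section Aux.
Variables (L : layerSemiring) (G : zmodType).

Lemma lay_exp_some (x : G) (la : L) j :
  exists t, lay_exp (Some (x, la)) j = Some (x *+ j, t).
Proof.
elim: j => [|j [t IH]] /=; first by exists (lone L); rewrite mulr0n.
rewrite IH; exists (lmul la t); by rewrite mulrS.
Qed.

Lemma prod_gen (I : eqType) (r : seq I) (F : I -> lay L G) (e : I -> nat) x :
  (forall i g l, F i = Some (g, l) -> g = x *+ e i) ->
  \big[@lay_mul L G/lone_ L G]_(i <- r) F i =
  omap (fun l => (x *+ (\sum_(i <- r) e i)%N, l))
       (\big[@l0mul L/Some (lone L)]_(i <- r) layer (F i)).
Proof.
move=> HF; elim: r => [|i r IH]; first by rewrite !big_nil /= mulr0n.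
rewrite !big_cons IH.
case E: (F i) => [[g l]|] //=.
rewrite (HF _ _ _ E).
case: (\big[@l0mul L/_]_(j <- r) _) => //= t.
by rewrite mulrnDr.
Qed.

Lemma prod_some (I : eqType) (r : seq I) (F : I -> lay L G) l :
  \big[@l0mul L/Some (lone L)]_(i <- r) layer (F i) = Some l ->
  forall i, i \in r -> F i <> None.
Proof.
elim: r l => [|j r IH] l //.
rewrite big_cons.
case E: (F j) => [[g t]|] //=.
case E2: (\big[@l0mul L/_]_(i <- r) _) => [u|] //= _ i.
rewrite in_cons => /orP [/eqP ->|]; first by rewrite E.
exact: (IH u E2 i).
Qed.

Lemma prod_nz (I : eqType) (r : seq I) (F : I -> option L) :
  (forall i, i \in r -> F i <> None) ->
  \big[@l0mul L/Some (lone L)]_(i <- r) F i <> None.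
Proof.
elim: r => [|j r IH] H; first by rewrite big_nil.
rewrite big_cons.
have := H j (mem_head _ _).
have := IH (fun i Hi => H i (mem_behead (s:=j :: r) Hi)).
case: (\big[@l0mul L/_]_(i <- r) _) => // u _.
by case: (F j).
Qed.

Lemma sum_some (I : eqType) (r : seq I) (F : I -> option L) i0 :
  i0 \in r -> F i0 <> None -> \big[@l0add L/None]_(i <- r) F i <> None.
Proof.
elim: r => [|j r IH] //.
rewrite big_cons in_cons => /orP [/eqP ->|Hi] Hn.
  by case: (F j) Hn => //= u _; case: (\big[@l0add L/_]_(i <- r) _).
have := IH Hi Hn.
by case: (\big[@l0add L/_]_(i <- r) _) => // u _; case: (F j).
Qed.

Lemma add_morph (leG : rel G) (c : G) (u v : option L) :
  lay_add leG (omap (fun l => (c, l)) u) (omap (fun l => (c, l)) v)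
  = omap (fun l => (c, l)) (l0add u v).
Proof. by case: u => [u|]; case: v => [v|] //=; rewrite eqxx. Qed.

End Aux.

Theorem lemma8p5 (L : layerSemiring) (G : zmodType) (leG : rel G)
  (HG : total_order_group leG)
  (a : lay L G) (Ha : a <> lzero L G)
  (m n : nat) (ell k : nat -> L) :
  let alpha := fun i : nat => with_layer (lay_exp a (m - i)%N) (ell (m - i)%N) in
  let beta  := fun j : nat => with_layer (lay_exp a (n - j)%N) (k (n - j)%N) in
  let S := sylvester m n alpha beta in
  exists l : L,
    l0perm (map_mx (@layer L G) S) = Some l /\
    lay_perm leG S = Some (lgval (lay_exp a (m * n)%N), l).
Proof.
case: a Ha => [[x la]|] // _ alpha beta S.
set h := fun l : L => (x *+ (m * n), l).
have Hterm : forall s : 'S_(n + m),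
  \big[@lay_mul L G/lone_ L G]_(i < n + m) S i (s i) =
  omap h (\big[@l0mul L/Some (lone L)]_(i < n + m) (map_mx (@layer L G) S) i (s i)).
  move=> s.
  pose e := fun r : 'I_(n + m) => if (r < n)%N then (m - (s r - r))%N
                                  else (n - (s r - (r - n)))%N.
  rewrite (@prod_gen _ _ _ _ _ e x); last first.
    move=> i g l; rewrite /S mxE /e.
    case: ifP => Hi; case: ifP => Hr //.
      rewrite /alpha /with_layer.
      have [t ->] := lay_exp_some x la (m - (s i - i))%N.
      by case=> ->.
    rewrite /beta /with_layer.
    have [t ->] := lay_exp_some x la (n - (s i - (i - n)))%N.
    by case=> ->.
  under [in RHS]eq_bigr do rewrite mxE.
  case Hq: (\big[@l0mul L/_]_(i <- _) _) => [q|] //=.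
  have nz := prod_some Hq.
  have He : forall i : 'I_(n + m),
      (e i + s i = i + (if (i < n)%N then m else 0))%N.
    move=> i; have := nz i (mem_index_enum _).
    rewrite /S /e mxE.
    case: ifP => Hi; case: ifP => //= /andP [h1 h2] _; lia.
  have Hsum : (\sum_(i < n + m) e i + \sum_(i < n + m) s i =
     \sum_(i < n + m) i + \sum_(i < n + m) (if (i < n)%N then m else 0))%N.
    by rewrite -!big_split /=; apply: eq_bigr => i _; exact: He.
  have Hs : (\sum_(i < n + m) s i = \sum_(i < n + m) i)%N.
    by rewrite [RHS](reindex_inj (@perm_inj _ s)).
  have Hc : (\sum_(i < n + m) (if (i < n)%N then m else 0) = n * m)%N.
    rewrite big_split_ord /=.
    have -> : (\sum_(i < n) (if (lshift m i < n)%N then m else 0) = \sum_(i < n) m)%N.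
      by apply: eq_bigr => i _; rewrite /= ltn_ord.
    have -> : (\sum_(i < m) (if (rshift n i < n)%N then m else 0) = 0)%N.
      by rewrite big1 // => i _; rewrite /= ltnNge leq_addr.
    by rewrite sum_nat_const card_ord addn0.
  have Hfin : (\sum_(i < n + m) e i = m * n)%N.
    by move: Hsum; rewrite Hs Hc => Hsum; lia.
  by rewrite /h Hfin.
unfold lay_perm, l0perm.
rewrite (eq_bigr _ (fun s _ => Hterm s)).
have Hm : {morph omap h : u v / l0add u v >-> lay_add leG u v}.
  by move=> u v; rewrite /h add_morph.
rewrite -(@big_morph _ _ (omap h) None _ None _ Hm erefl).
case Hp: (\big[@l0add L/_]_(s : 'S_(n + m)) _) => [q|].
  exists q; split => //.
  have [t ->] := lay_exp_some x la (m * n).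
  by rewrite /h /= mulnC.
exfalso.
have Hd : \big[@l0mul L/Some (lone L)]_(i < n + m)
       (map_mx (@layer L G) S) i ((1%g : 'S_(n + m)) i) <> None.
  apply: prod_nz => i _.
  rewrite perm1 !mxE.
  case: ifP => Hi.
    by rewrite leqnn leq_addr.
  by rewrite leq_subr /= subnK ?leqnn // leqNgt Hi.
move: Hp; apply: (sum_some (i0 := 1%g)); first exact: mem_index_enum.
exact: Hd.
Qed.
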